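(* Let $\varepsilon>0$, $c>0$, and let $G$ be a graph with $m$ edges, clique number $\omega=\omega(G)\ge 3$, and $t(G)\le c\,m^{1.5-\varepsilon}$. If $m\ge \big(10.06\,c\sqrt{\omega}\big)^{1/\varepsilon}$, then \[\Lambda_\ell(G)\le 2\left(1-\frac{1}{\omega}\right),\] where $\ell=\min\{n^+,\omega\}$.
   Context: For a simple graph $G$ on $n$ vertices and $m$ edges, let $\lambda_1\ge\cdots\ge\lambda_n$ be the eigenvalues of its adjacency matrix; $n^+$ is the number of positive eigenvalues. $\omega(G)$ is the clique number and $t(G)$ the number of triangles. $s_k(G)=\sum_{i=1}^k\lambda_i^2$ and $\Lambda_k(G)=s_k(G)/m$. *)

(* Defs.v *)
From HB Require Import structures.
From mathcomp Require Import all_boot all_order all_algebra.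
From mathcomp Require Import reals exp.
Set Implicit Arguments. Unset Strict Implicit. Unset Printing Implicit Defensive.
Import Order.TTheory GRing.Theory Num.Theory.
Local Open Scope ring_scope.

Definition simple_graph (n : nat) (adj : rel 'I_n) : Prop :=
  (forall i j, adj i j = adj j i) /\ (forall i, ~~ adj i i).

Definition adjmx (R : realType) (n : nat) (adj : rel 'I_n) : 'M[R]_n :=
  \matrix_(i, j) (adj i j)%:R.

Definition nedges (n : nat) (adj : rel 'I_n) : nat :=
  #|[set p : 'I_n * 'I_n | (p.1 < p.2)%N && adj p.1 p.2]|.

Definition is_clique (n : nat) (adj : rel 'I_n) (S : {set 'I_n}) : bool :=
  [forall i in S, forall j in S, (i != j) ==> adj i j].

Definition clique_number (n : nat) (adj : rel 'I_n) : nat :=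
  \max_(S : {set 'I_n} | is_clique adj S) #|S|.

Definition ntriangles (n : nat) (adj : rel 'I_n) : nat :=
  #|[set S : {set 'I_n} | (#|S| == 3)%N && is_clique adj S]|.

(* ev is the list of eigenvalues (with multiplicity) of A, in non-increasing
   order: lambda_1 >= ... >= lambda_n, i.e. char_poly A = prod (X - lambda_i). *)
Definition sorted_eigenvalues (R : realType) (n : nat) (A : 'M[R]_n)
    (ev : seq R) : Prop :=
  [/\ size ev = n, sorted (fun x y : R => y <= x) ev &
      char_poly A = \prod_(x <- ev) ('X - x%:P)].

Definition npos (R : realType) (ev : seq R) : nat := count (fun x => 0 < x) ev.

Definition sk (R : realType) (ev : seq R) (k : nat) : R :=
  \sum_(i < k) ev`_i ^+ 2.

Definition Lambdak (R : realType) (ev : seq R) (k m : nat) : R :=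
  sk ev k / m%:R.

(* Main.v *)
Require Import Defs.
From HB Require Import structures.
From mathcomp Require Import all_boot all_order all_algebra.
From mathcomp Require Import reals exp.
From mathcomp Require Import complex spectral mxred.
From mathcomp Require Import ring lra.
Import Order.TTheory GRing.Theory Num.Theory.
Local Open Scope ring_scope.
Set Implicit Arguments. Unset Strict Implicit. Unset Printing Implicit Defensive.


Lemma char_poly_sim (R : comNzRingType) n (P A Q : 'M[R]_n) :
  P *m Q = 1%:M -> char_poly (P *m A *m Q) = char_poly A.
Proof.
move=> PQ.
rewrite /char_poly.
have -> : char_poly_mx (P *m A *m Q) =
   map_mx polyC P *m char_poly_mx A *m map_mx polyC Q.
  rewrite /char_poly_mx mulmxBr mulmxBl -!map_mxM.
  rewrite mul_mx_scalar -scalemxAl -map_mxM PQ map_mx1 scalemx1.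
  done.
rewrite !det_mulmx [X in X * _]mulrC -mulrA -det_mulmx -map_mxM PQ map_mx1.
by rewrite det1 mulr1.
Qed.

Lemma trig_mulmx (R : pzSemiRingType) n (A B : 'M[R]_n) :
  is_trig_mx A -> is_trig_mx B ->
  is_trig_mx (A *m B) /\ (forall i, (A *m B) i i = A i i * B i i).
Proof.
move=> /is_trig_mxP tA /is_trig_mxP tB; split.
  apply/is_trig_mxP => i j lij; rewrite !mxE big1 // => k _.
  case: (ltnP i k) => [lik|lki]; first by rewrite tA // mul0r.
  by rewrite tB ?mulr0 // (leq_ltn_trans lki lij).
move=> i; rewrite !mxE (bigD1 i) //= big1 ?addr0 // => k nki.
case: (ltngtP i k) => [lik|lki|eik]; first by rewrite tA // mul0r.
  by rewrite tB ?mulr0.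
by move: nki; rewrite (val_inj eik) eqxx.
Qed.

Definition mpow (R : pzSemiRingType) n (A : 'M[R]_n) k :=
  iter k (fun B => A *m B) 1%:M.

Lemma trig_mpow (R : pzSemiRingType) n (A : 'M[R]_n) k :
  is_trig_mx A -> is_trig_mx (mpow A k) /\ (forall i, (mpow A k) i i = A i i ^+ k).
Proof.
move=> tA; elim: k => [|k [IH1 IH2]] /=.
  by split; [exact: scalar_mx_is_trig | move=> i; rewrite mxE eqxx].
have [h1 h2] := trig_mulmx tA IH1; split => // i.
by rewrite h2 IH2 exprS.
Qed.

Lemma mpow_conj (R : comNzRingType) n (P A Q : 'M[R]_n) k :
  Q *m P = 1%:M -> mpow (P *m A *m Q) k = if k is 0 then 1%:M else P *m mpow A k *m Q.
Proof.
move=> QP; elim: k => [//|k IH].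
case: k IH => [|k] IH.
  by rewrite /mpow /= !mulmx1.
have -> : mpow (P *m A *m Q) k.+2 = (P *m A *m Q) *m mpow (P *m A *m Q) k.+1 by [].
have -> : mpow A k.+2 = A *m mpow A k.+1 by [].
rewrite IH; rewrite -!mulmxA; congr (_ *m _).
by rewrite !mulmxA; rewrite -[A *m Q *m P]mulmxA QP mulmx1.
Qed.

Lemma tr_mpow_closed (C : numClosedFieldType) n (A : 'M[C]_n) (s : seq C) k :
  char_poly A = \prod_(x <- s) ('X - x%:P) ->
  \tr (mpow A k) = \sum_(x <- s) x ^+ k.
Proof.
case: n A => [|n] A hA.
  have := size_char_poly A; rewrite hA size_prod_XsubC => -[].
  case: s hA => // _ _; rewrite big_nil /mxtrace big_ord0 //.
have [P Pu tT] := Schur A (ltn0Sn n); rewrite /= in tT.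
have Pinv := unitarymx_unit Pu.
move: tT; rewrite /similar_to /conjmx pinvmxE //; set T := P *m A *m invmx P => tT.
have hT : char_poly T = char_poly A by apply: char_poly_sim; rewrite mulmxV.
move: hA; rewrite -hT (char_poly_trig tT).
rewrite -[\prod_(i < n.+1) _](big_map (fun i => T i i) xpredT (fun x => 'X - x%:P)).
move=> hs.
rewrite -(perm_big _ (prod_XsubC_eq hs)).
rewrite big_map /=.
have [_ dT] := trig_mpow k tT.
have -> : \tr (mpow A k) = \tr (mpow T k).
  rewrite /T mpow_conj ?mulVmx //; case: k {dT} => [//|k].
  by rewrite [RHS]mxtrace_mulC mulmxA mulVmx // mul1mx.
by rewrite /mxtrace; apply: eq_bigr => i _; rewrite dT.
Qed.

Lemma tr_mpow_real (R : realType) n (A : 'M[R]_n) (ev : seq R) k :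
  char_poly A = \prod_(x <- ev) ('X - x%:P) ->
  \tr (mpow A k) = \sum_(x <- ev) x ^+ k.
Proof.
move=> hA.
pose f := real_complex R.
have hC : char_poly (map_mx f A) = \prod_(y <- map f ev) ('X - y%:P).
  rewrite -map_char_poly hA map_prod_XsubC big_map //.
have := tr_mpow_closed k hC.
have -> : mpow (map_mx f A) k = map_mx f (mpow A k).
  elim: k {hC} => [|k IH] /=; first by rewrite map_mx1.
  by rewrite /mpow /= -/(mpow _ _) IH map_mxM.
rewrite trace_map_mx big_map.
under eq_bigr do rewrite -rmorphXn.
by rewrite -rmorph_sum => /complexI.
Qed.


Lemma edges_bound n (adj : rel 'I_n) : simple_graph adj ->
  (#|[set p : 'I_n * 'I_n | adj p.1 p.2]| <= 2 * nedges adj)%N.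
Proof.
move=> [sym irr].
set E1 := [set p : 'I_n * 'I_n | (p.1 < p.2)%N && adj p.1 p.2].
pose sw := fun p : 'I_n * 'I_n => (p.2, p.1).
have sub : [set p : 'I_n * 'I_n | adj p.1 p.2] \subset E1 :|: sw @: E1.
  apply/subsetP => -[i j]; rewrite inE /= => hij.
  case: (ltngtP i j) => [lij|lji|eij].
  - by apply/setUP; left; rewrite inE /= lij hij.
  - apply/setUP; right; apply/imsetP; exists (j, i) => //.
    by rewrite inE /= lji sym.
  - by move: hij; rewrite (val_inj eij) (negbTE (irr j)).
apply: (leq_trans (subset_leq_card sub)).
apply: (leq_trans (leq_card_setU _ _)).
rewrite /nedges -/E1 mul2n -addnn leq_add2l.
exact: leq_imset_card.
Qed.

Lemma set3_card (T : finType) (a b c : T) :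
  a != b -> b != c -> c != a -> #|[set a; b; c]| = 3%N.
Proof.
move=> ab bc ca; rewrite setUC !cardsU1 cards1 !inE.
by rewrite (negbTE ca) eq_sym (negbTE bc) ab.
Qed.

Lemma fiber_bound (T : finType) (S : {set T}) (P : pred (T * T * T)) :
  #|S| = 3%N ->
  (forall x, P x -> [/\ x.1.1 != x.1.2, x.1.2 != x.2 & x.2 != x.1.1]) ->
  (#|[set x | P x && ([set x.1.1; x.1.2; x.2] == S)]| <= 6)%N.
Proof.
move=> cS hP.
have /card_gt2P [a [b [c [[aS bS cS'] [ab bc ca]]]]] : (2 < #|S|)%N by rewrite cS.
have eS : [set a; b; c] = S.
  apply/eqP; rewrite eqEcard cS set3_card // leqnn andbT.
  by apply/subsetP => u; rewrite !inE => /orP[/orP[]|]/eqP->.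
pose l := [:: (a,b,c); (a,c,b); (b,a,c); (b,c,a); (c,a,b); (c,b,a)].
apply: (@leq_trans #|l|); last exact: card_size.
apply: subset_leq_card; apply/subsetP => -[[i j] k]; rewrite inE /= => /andP[hx /eqP gx].
have [hij hjk hki] := hP _ hx.
have mem u : u \in [set i; j; k] -> [\/ u = a, u = b | u = c].
  by rewrite gx -eS !inE => /orP[/orP[]|] /eqP ->; [exact: Or31|exact: Or32|exact: Or33].
have mi : i \in [set i; j; k] by rewrite !inE eqxx.
have mj : j \in [set i; j; k] by rewrite !inE eqxx ?orbT.
have mk : k \in [set i; j; k] by rewrite !inE eqxx ?orbT.
move: (mem _ mi) (mem _ mj) (mem _ mk) hij hjk hki => {mem mi mj mk gx hx}.
by case=> -> [] -> [] ->; rewrite ?eqxx //= => _ _ _; rewrite !inE !eqxx ?orbT.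
Qed.

Lemma tri_bound n (adj : rel 'I_n) : simple_graph adj ->
  (#|[set x : 'I_n * 'I_n * 'I_n | [&& adj x.1.1 x.1.2, adj x.1.2 x.2 & adj x.2 x.1.1]]|
     <= 6 * ntriangles adj)%N.
Proof.
move=> [sym irr].
have irrF v : adj v v = false by apply: negbTE.
set P := fun x : 'I_n * 'I_n * 'I_n => [&& adj x.1.1 x.1.2, adj x.1.2 x.2 & adj x.2 x.1.1].
have dP x : P x -> [/\ x.1.1 != x.1.2, x.1.2 != x.2 & x.2 != x.1.1].
  case: x => [[i j] k]; rewrite /P /= => /and3P[h1 h2 h3]; split.
  - by apply: contraTneq h1 => ->; rewrite irrF.
  - by apply: contraTneq h2 => ->; rewrite irrF.
  - by apply: contraTneq h3 => ->; rewrite irrF.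
pose g := fun x : 'I_n * 'I_n * 'I_n => [set x.1.1; x.1.2; x.2].
pose Q := fun S : {set 'I_n} => (#|S| == 3)%N && is_clique adj S.
have gQ x : P x -> Q (g x).
  move=> Px; have [d1 d2 d3] := dP x Px; rewrite /Q set3_card // eqxx /=.
  case: x Px d1 d2 d3 => [[i j] k]; rewrite /P /g /= => /and3P[h1 h2 h3] d1 d2 d3.
  apply/forall_inP => u hu; apply/forall_inP => v hv; apply/implyP => uv.
  move: hu hv uv; rewrite !inE => /orP[/orP[]|] /eqP -> /orP[/orP[]|] /eqP ->;
    rewrite ?eqxx //= => _; by rewrite // sym.
rewrite -sum1_card (partition_big g Q) //=.
rewrite /ntriangles -/Q mulnC -sum_nat_cond_const.
apply: leq_sum => S QS.
rewrite sum1_card.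
have := @fiber_bound _ S P; rewrite /g.
move: QS; rewrite /Q => /andP[/eqP c3 _] /(_ c3 dP).
apply: leq_trans; apply: subset_leq_card; apply/subsetP => x; rewrite !inE.
  by rewrite unfold_in /= inE.
by move=> x; rewrite inE; apply: gQ.
Qed.




Lemma card_sumR (R : realType) (T : finType) (P : pred T) :
  (#|[set x | P x]|)%:R = \sum_x (P x)%:R :> R.
Proof.
rewrite -sum1_card big_mkcond natr_sum; apply: eq_bigr => x _.
by rewrite inE; case: (P x).
Qed.

Lemma boolM (R : realType) (a b : bool) : (a%:R * b%:R : R) = (a && b)%:R.
Proof. by case: a; case: b; rewrite ?mulr1 ?mulr0 ?mul0r. Qed.

Lemma tr2 (R : realType) n (adj : rel 'I_n) : simple_graph adj ->
  \tr (mpow (adjmx R adj) 2) = (#|[set p : 'I_n * 'I_n | adj p.1 p.2]|)%:R.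
Proof.
move=> [sym irr].
rewrite card_sumR -(pair_big xpredT xpredT (fun i j => (adj i j)%:R)) /=.
rewrite /mpow /= mulmx1 /mxtrace; apply: eq_bigr => i _.
rewrite mxE; apply: eq_bigr => j _; rewrite !mxE boolM (sym j i) andbb //.
Qed.

Lemma tr3 (R : realType) n (adj : rel 'I_n) :
  \tr (mpow (adjmx R adj) 3) = (#|[set x : 'I_n * 'I_n * 'I_n |
      [&& adj x.1.1 x.1.2, adj x.1.2 x.2 & adj x.2 x.1.1]]|)%:R.
Proof.
rewrite card_sumR -(pair_big xpredT xpredT
   (fun (ij : 'I_n * 'I_n) k => ([&& adj ij.1 ij.2, adj ij.2 k & adj k ij.1])%:R)) /=.
rewrite -(pair_big xpredT xpredT
   (fun i j => \sum_k ([&& adj i j, adj j k & adj k i])%:R)) /=.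
rewrite /mpow /= mulmx1 /mxtrace; apply: eq_bigr => i _.
rewrite mxE; apply: eq_bigr => j _; rewrite !mxE mulr_sumr; apply: eq_bigr => k _.
by rewrite !mxE mulrA !boolM andbA.
Qed.


Lemma powR_step (R : realType) (eps c m w t : R) :
  0 < eps -> 0 < c -> 0 < w ->
  t <= c * powR m (3 / 2 - eps) ->
  powR (1006 / 100 * c * w) (1 / eps) <= m ->
  0 < m /\ t * (1006 / 100 * w) <= m * Num.sqrt m.
Proof.
move=> he hc hw ht hm.
set B := 1006 / 100 * c * w.
have hB : 0 < B by rewrite /B; apply: mulr_gt0 => //; apply: mulr_gt0 => //; lra.
have hm0 : 0 < m by apply: lt_le_trans hm; apply: powR_gt0.
split => //.
have hme : B <= powR m eps.
  have -> : B = powR (powR B (1 / eps)) eps.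
    by rewrite -powRrM mul1r mulVf ?gt_eqF // powRr1 // ltW.
  apply: ge0_ler_powR => //; [exact: ltW | rewrite nnegrE; exact: powR_ge0 | rewrite nnegrE; exact: ltW].
have hpe : 0 < powR m eps by apply: powR_gt0.
have e1 : powR m (3 / 2 - eps) = m * Num.sqrt m / powR m eps.
  rewrite powRB; last by rewrite (gt_eqF hm0) implybT.
  have -> : (3 / 2 : R) = 1 + 2^-1 by field.
  rewrite powRD; last by rewrite (gt_eqF hm0) implybT.
  by rewrite powRr1 ?ltW // powR12_sqrt ?ltW.
rewrite e1 in ht.
have hs : 0 <= m * Num.sqrt m by apply: mulr_ge0; [exact: ltW | exact: sqrtr_ge0].
set X := m * Num.sqrt m in ht hs *.
set pe := powR m eps in hme hpe ht.
have ht' : t * pe <= c * X.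
  by move: ht; rewrite mulrA ler_pdivlMr.
rewrite /B in hme.
have [t0|t0] := leP 0 t; last first.
  by apply: le_trans hs; rewrite nmulr_rle0 //; apply: mulr_ge0; [lra|exact: ltW].
nra.
Qed.


Lemma final_ineq (R : realType) (m om l S M H Tl t : R) :
 0 < m -> 3 <= om -> 0 <= l <= om -> 0 <= S -> 0 <= M -> S + M <= 2 * m ->
 H + Tl <= 6 * t ->
 (forall a, 0 <= a -> 3 / 2 * a * S - 1 / 2 * a ^+ 3 * l <= H) ->
 - (Num.sqrt M * M) <= Tl ->
 t * (1006 / 100 * Num.sqrt om) <= m * Num.sqrt m ->
 S <= 2 * m * (1 - 1 / om).
Proof.
move=> hm hom /andP[hl0 hl] hS0 hM0 hSM hHT hH hT ht.
rewrite leNgt; apply/negP => hS.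
have om0 : 0 < om by lra.
set w := Num.sqrt om; set p := Num.sqrt S; set q := Num.sqrt M; set z := Num.sqrt m.
set r2 := Num.sqrt (2 : R).
have w0 : 0 < w by rewrite sqrtr_gt0.
have p0 : 0 <= p by apply: sqrtr_ge0.
have q0 : 0 <= q by apply: sqrtr_ge0.
have z0 : 0 < z by rewrite sqrtr_gt0.
have r20 : 0 <= r2 by apply: sqrtr_ge0.
have ww : w ^+ 2 = om by rewrite sqr_sqrtr // ltW.
have pp : p ^+ 2 = S by rewrite sqr_sqrtr.
have qq : q ^+ 2 = M by rewrite sqr_sqrtr.
have zz : z ^+ 2 = m by rewrite sqr_sqrtr // ltW.
have rr : r2 ^+ 2 = 2 by rewrite sqr_sqrtr //; lra.
have r2u : r2 <= 99 / 70 by nra.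
have hom' : om * S > 2 * m * (om - 1).
  move: hS; rewrite mulrBr mulr1 -(ltr_pM2l om0).
  have -> : om * (2 * m - 2 * m * (1 / om)) = 2 * m * (om - 1) by field; lra.
  done.
have F1 : p ^+ 3 <= H * w.
  have a0 : 0 <= p / w by apply: divr_ge0 => //; exact: ltW.
  have := hH _ a0.
  have e : 3 / 2 * (p / w) * S - 1 / 2 * (p / w) ^+ 3 * om = p ^+ 3 / w.
    rewrite -ww -pp; field; lra.
  have : 1 / 2 * (p / w) ^+ 3 * l <= 1 / 2 * (p / w) ^+ 3 * om.
    apply: ler_wpM2l => //; apply: mulr_ge0; [lra | exact: exprn_ge0].
  move=> h1 h2.
  have h3 : p ^+ 3 / w <= H by rewrite -e; lra.
  by move: h3; rewrite ler_pdivrMr.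
have F2 : - q ^+ 3 <= Tl.
  have e : q ^+ 3 = q * M by rewrite -qq; ring.
  by rewrite e.
have F3 : t * w * (1006 / 100) <= z ^+ 3.
  by move: ht; rewrite -/w -/z -zz; nra.
have F4 : w * q <= r2 * z.
  have h : (w * q) ^+ 2 <= (r2 * z) ^+ 2.
    rewrite !exprMn ww qq rr zz; nra.
  rewrite -ler_sqr ?nnegrE //; apply: mulr_ge0 => //; exact: ltW.
have F5 : 4 / 3 * z ^+ 2 <= p ^+ 2 by rewrite pp zz; nra.
have F6 : p ^+ 2 <= 2 * z ^+ 2 by rewrite pp zz; nra.
have F7 : 209 / 181 * z <= p.
  rewrite -ler_sqr ?nnegrE //; [nra | apply: mulr_ge0 => //; [lra|exact: ltW]].
have F8 : (209 / 181 * z) ^+ 3 <= p ^+ 3.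
  rewrite ler_pXn2r ?nnegrE //; apply: mulr_ge0 => //; [lra|exact: ltW].
have F9 : w * q ^+ 3 <= r2 * z * (2 * z ^+ 2 - p ^+ 2).
  have : w * q ^+ 3 = (w * q) * q ^+ 2 by ring.
  move=> ->; rewrite qq.
  have hM : M <= 2 * z ^+ 2 - p ^+ 2 by rewrite zz pp; lra.
  apply: ler_pM => //; [apply: mulr_ge0 => //; exact: ltW].
have F10 : r2 * z * (2 * z ^+ 2 - p ^+ 2) <= 99 / 70 * z * (2 / 3 * z ^+ 2).
  apply: ler_pM; [nra|nra|nra|nra].
have G : p ^+ 3 - w * q ^+ 3 <= 600 / 1006 * z ^+ 3.
  have : (H + Tl) * w <= 6 * t * w by apply: ler_wpM2r => //; exact: ltW.
  nra.
have : (209 / 181 * z) ^+ 3 - 99 / 70 * z * (2 / 3 * z ^+ 2)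
        <= 600 / 1006 * z ^+ 3 by lra.
have z3 : 0 < z ^+ 3 by apply: exprn_gt0.
nra.
Qed.


Lemma sorted_pos (R : realType) (s : seq R) k :
  sorted (fun x y : R => y <= x) s -> (k <= count (fun x : R => (0 < x)%R) s)%N ->
  all (fun x => 0 <= x) (take k s).
Proof.
elim: s k => [|x s IH] k //=.
move=> hp; have hs := path_sorted hp.
have hall : all (fun y => y <= x) s.
  by apply: (order_path_min _ hp) => a b c hba hcb; apply: le_trans hcb hba.
case: k => [//|k] /=.
have [x0|x0] := ltP 0 x.
  rewrite add1n ltnS => hk; rewrite (ltW x0) /=; exact: IH.
have -> : count (fun x => 0 < x) s = 0%N.
  apply/eqP; rewrite -leqn0 leqNgt -has_count; apply/negP => /hasP [y ys y0].
  by have yx := allP hall y ys; move: (lt_le_trans y0 (le_trans yx x0)); rewrite ltxx.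
by rewrite ltnNge leq0n.
Qed.

Lemma sum_take (R : realType) (s : seq R) k (F : R -> R) :
  (k <= size s)%N -> \sum_(i < k) F s`_i = \sum_(x <- take k s) F x.
Proof.
move=> hk; rewrite (big_nth 0) size_take.
have -> : (if (k < size s)%N then k else size s) = k.
  by case: ltnP => // h; apply/eqP; rewrite eqn_leq hk h.
rewrite big_mkord; apply: eq_bigr => i _; rewrite nth_take //.
Qed.

Lemma head_bound (R : realType) (h : seq R) a :
  all (fun x => 0 <= x) h -> 0 <= a ->
  3 / 2 * a * (\sum_(x <- h) x ^+ 2) - 1 / 2 * a ^+ 3 * (size h)%:R
    <= \sum_(x <- h) x ^+ 3.
Proof.
move=> /allP hh a0.
rewrite mulr_sumr -(sum1_size h) natr_sum mulr_sumr -sumrB.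
rewrite [X in _ <= X]big_seq [X in X <= _]big_seq; apply: ler_sum => x xh.
have x0 := hh x xh.
have : 0 <= (x - a) ^+ 2 * (2 * x + a) by apply: mulr_ge0; [exact: sqr_ge0 | lra].
move=> h1; nra.
Qed.

Lemma tail_bound (R : realType) (s : seq R) :
  - (Num.sqrt (\sum_(x <- s) x ^+ 2) * \sum_(x <- s) x ^+ 2) <= \sum_(x <- s) x ^+ 3.
Proof.
set M := \sum_(x <- s) x ^+ 2.
set r := Num.sqrt M.
have r0 : 0 <= r by apply: sqrtr_ge0.
have M0 : 0 <= M by apply: sumr_ge0 => x _; exact: sqr_ge0.
have rr : r ^+ 2 = M by rewrite sqr_sqrtr.
rewrite /M -mulrN -sumrN mulr_sumr; rewrite [X in _ <= X]big_seq [X in X <= _]big_seq; apply: ler_sum => x xs.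
have xM : x ^+ 2 <= M.
  rewrite /M (perm_big _ (perm_to_rem xs)) big_cons lerDl.
  by apply: sumr_ge0 => y _; exact: sqr_ge0.
have xr : - r <= x.
  have : x ^+ 2 <= r ^+ 2 by rewrite rr.
  nra.
have : 0 <= x ^+ 2 * (x + r) by apply: mulr_ge0; [exact: sqr_ge0 | lra].
move=> h; rewrite -/r; nra.
Qed.

Unset Implicit Arguments. Set Strict Implicit. Set Printing Implicit Defensive.

Theorem mainTheorem3 (R : realType) (eps c : R) (n : nat) (adj : rel 'I_n)
  (ev : seq R) :
  0 < eps -> 0 < c -> simple_graph adj ->
  (3 <= clique_number adj)%N ->
  (ntriangles adj)%:R <= c * powR (nedges adj)%:R (3 / 2 - eps) ->
  powR (1006 / 100 * c * Num.sqrt (clique_number adj)%:R) (1 / eps)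
    <= (nedges adj)%:R ->
  sorted_eigenvalues (adjmx R adj) ev ->
  Lambdak ev (minn (npos ev) (clique_number adj)) (nedges adj)
    <= 2 * (1 - 1 / (clique_number adj)%:R).
Proof.
move=> heps hc hsg hom ht hm [hsz hsort hchar].
set om := clique_number adj in hom ht hm *.
set m := nedges adj in ht hm *.
set l := minn (npos ev) om.
have om3 : (3 : R) <= om%:R by rewrite (ler_nat R 3 om).
have w0 : 0 < Num.sqrt (om%:R : R) by rewrite sqrtr_gt0; lra.
have [hm0 htb] := powR_step heps hc w0 ht hm.
have s2 : \sum_(x <- ev) x ^+ 2 <= 2 * m%:R.
  rewrite -(tr_mpow_real 2 hchar) (tr2 _ hsg).
  have := edges_bound hsg; rewrite -(ler_nat R) natrM => h; exact: h.
have s3 : \sum_(x <- ev) x ^+ 3 <= 6 * (ntriangles adj)%:R.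
  rewrite -(tr_mpow_real 3 hchar) tr3.
  have := tri_bound hsg; rewrite -(ler_nat R) natrM => h; exact: h.
have lsz : (l <= size ev)%N.
  by apply: leq_trans (geq_minl _ _) _; rewrite /npos count_size.
have hpos : all (fun x => 0 <= x) (take l ev).
  by apply: sorted_pos hsort _; exact: geq_minl.
have lom : (l <= om)%N by exact: geq_minr.
have sizeh : size (take l ev) = l by rewrite size_take_min; apply/minn_idPl.
rewrite /Lambdak /sk (sum_take (fun x => x ^+ 2) lsz).
rewrite ler_pdivrMr //.
rewrite -(cat_take_drop l ev) !big_cat /= in s2 s3.
have l0 : 0 <= (l%:R : R) <= om%:R by rewrite ler0n /= ler_nat.
have S0 : 0 <= \sum_(x <- take l ev) x ^+ 2 by apply: sumr_ge0 => x _; exact: sqr_ge0.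
have M0 : 0 <= \sum_(x <- drop l ev) x ^+ 2 by apply: sumr_ge0 => x _; exact: sqr_ge0.
have hH : forall a, 0 <= a -> 3 / 2 * a * (\sum_(x <- take l ev) x ^+ 2)
    - 1 / 2 * a ^+ 3 * l%:R <= \sum_(x <- take l ev) x ^+ 3.
  by move=> a a0; have := head_bound hpos a0; rewrite sizeh.
have key := final_ineq hm0 om3 l0 S0 M0 s2 s3 hH (tail_bound _) htb.
apply: (le_trans key); rewrite le_eqVlt; apply/orP; left; apply/eqP; ring.
Qed.
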